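(* Let $G=(\mathscr{V},\mathscr{E},m,\theta)$ be a bi-partite weighted graph and $V:\mathscr{V}\to[0,\infty)$. The following are equivalent: (i) $\langle f,(d_G(Q)-V(Q))f\rangle\le\langle f,\Delta_{\mathscr{E},\theta}f\rangle$ for all $f\in\mathcal{C}_c(\mathscr{V})$; (ii) $\langle f,\Delta_{\mathscr{E},\theta}f\rangle\le\langle f,(d_G(Q)+V(Q))f\rangle$ for all $f\in\mathcal{C}_c(\mathscr{V})$; (iii) $|\langle f,\mathcal{A}_{\mathscr{E},\theta}f\rangle|\le\langle f,V(Q)f\rangle$ for all $f\in\mathcal{C}_c(\mathscr{V})$, where $(\mathcal{A}_{\mathscr{E},\theta}f)(x):=m^{-2}(x)\sum_{y\in\mathscr{V}}\mathscr{E}(x,y)e^{i\theta(x,y)}f(y)$ is the magnetic adjacency matrix.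
   Context: A weighted graph $G=(\mathscr{V},\mathscr{E},m,\theta)$: $\mathscr{V}$ countable, $\mathscr{E}:\mathscr{V}\times\mathscr{V}\to[0,\infty)$ symmetric, $m:\mathscr{V}\to(0,\infty)$, $\theta:\mathscr{V}\times\mathscr{V}\to[-\pi,\pi]$ antisymmetric; $x\sim y$ iff $\mathscr{E}(x,y)\neq0$; assumed locally finite, connected, without loops. Bi-partite: $\mathscr{V}$ can be partitioned into two subsets such that no two vertices in the same subset are neighbors. In $\ell^2(\mathscr{V},m^2)$ (inner product $\sum_x m^2(x)\overline{f(x)}g(x)$), $\Delta_{\mathscr{E},\theta}$ acts on finitely supported $f$ by $(\Delta_{\mathscr{E},\theta}f)(x)=m^{-2}(x)\sum_y\mathscr{E}(x,y)(f(x)-e^{i\theta(x,y)}f(y))$; $d_G(x)=m^{-2}(x)\sum_y\mathscr{E}(x,y)$; $W(Q)$ is multiplication by $W$; $\mathcal{C}_c(\mathscr{V})$ = finitely supported functions. *)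

(* Defs.v *)
From mathcomp Require Import all_boot all_order all_algebra.
From mathcomp Require Import all_classical all_reals all_analysis.
From mathcomp Require Import complex.
Set Implicit Arguments. Unset Strict Implicit. Unset Printing Implicit Defensive.
Import Order.TTheory GRing.Theory Num.Theory.
Local Open Scope classical_set_scope.
Local Open Scope ring_scope.
Local Open Scope complex_scope.

Section WGraph.
Variables (R : realType) (V : countType).
Variables (E : V -> V -> R) (m : V -> R) (theta : V -> V -> R).

Definition adj (x y : V) : bool := E x y != 0.

Definition weighted_graph : Prop :=
  (forall x y, E x y = E y x) /\
  (forall x y, 0 <= E x y) /\
  (forall x, 0 < m x) /\
  (forall x y, theta x y = - theta y x) /\
  (forall x y, - pi <= theta x y <= pi) /\
  (forall x, exists s : seq V, forall y, adj x y -> y \in s) /\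
  (forall x y, exists p : seq V, path adj x p && (last x p == y)) /\
  (forall x, E x x = 0).

Definition bipartite : Prop :=
  exists P : V -> bool, forall x y, adj x y -> P x != P y.

Definition fin_supp (f : V -> R[i]) : Prop :=
  exists s : seq V, forall x, x \notin s -> f x = 0.

Definition expi (t : R) : R[i] := (cos t) +i* (sin t).

Definition ip (f g : V -> R[i]) : R[i] :=
  \sum_(x \in [set: V]) ((m x ^+ 2)%:C * (f x)^* * g x).

Definition mlap (f : V -> R[i]) (x : V) : R[i] :=
  ((m x ^+ 2)^-1)%:C *
    \sum_(y \in [set: V]) ((E x y)%:C * (f x - expi (theta x y) * f y)).

Definition madj (f : V -> R[i]) (x : V) : R[i] :=
  ((m x ^+ 2)^-1)%:C *
    \sum_(y \in [set: V]) ((E x y)%:C * expi (theta x y) * f y).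

Definition degG (x : V) : R :=
  (m x ^+ 2)^-1 * \sum_(y \in [set: V]) E x y.

(* multiplication operator W(Q) *)
Definition mulop (W : V -> R) (f : V -> R[i]) (x : V) : R[i] := (W x)%:C * f x.

End WGraph.

(* Main.v *)
Require Import Defs.
From mathcomp Require Import all_boot all_order all_algebra.
From mathcomp Require Import all_classical all_reals all_analysis.
From mathcomp Require Import complex finmap ring.
Import Order.TTheory GRing.Theory Num.Theory.
Local Open Scope ring_scope.
Local Open Scope complex_scope.

Lemma fsumT (T : choiceType) (K : zmodType) (r : seq T) (F : T -> K) :
  uniq r -> (forall i, i \notin r -> F i = 0) ->
  \sum_(i \in [set: T]) F i = \sum_(i <- r) F i.
Proof.
move=> ur Fr; rewrite (fsbigTE [fset x | x in r]%fset); last first.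
  by move=> i; rewrite inE /= => /Fr.
apply: perm_big; rewrite uniq_perm ?fset_uniq // => i; by rewrite !inE.
Qed.

Arguments fsumT {T K} r {F}.

Section S.
Variables (R : realType) (V : countType) (E : V -> V -> R) (m : V -> R) (theta : V -> V -> R).
Hypothesis Esym : forall x y, E x y = E y x.
Hypothesis mpos : forall x, 0 < m x.
Hypothesis thN : forall x y, theta x y = - theta y x.
Hypothesis lf : forall x, exists s : seq V, forall y, adj E x y -> y \in s.

Lemma nbr x : exists s, uniq s /\ forall y, y \notin s -> E x y = 0.
Proof.
have [s Hs] := lf x; exists (undup s); split; first exact: undup_uniq.
move=> y; rewrite mem_undup => ys; apply/eqP; apply: contraNT ys => h; exact: Hs.
Qed.

Lemma mlapE (f : V -> R[i]) x : mlap E m theta f x = (degG E m x)%:C * f x - madj E m theta f x.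
Proof.
have [s [us Hs]] := nbr x.
rewrite /mlap /madj /degG !(fsumT s us); last 3 first.
- by move=> y /Hs ->; rewrite !mul0r.
- by move=> y /Hs ->.
- by move=> y /Hs ->; rewrite mul0r.
rewrite rmorphM raddf_sum -mulrA -mulrBr; congr (_ * _).
rewrite mulr_suml -sumrB; apply: eq_bigr => y _; ring.
Qed.

Lemma ipE (f : V -> R[i]) r : uniq r -> (forall x, x \notin r -> f x = 0) -> forall g,
  ip m f g = \sum_(x <- r) (m x ^+ 2)%:C * (f x)^*%R * g x.
Proof.
move=> ur Hr g; rewrite /ip (fsumT r ur) // => x /Hr ->.
by rewrite raddf0 mulr0 mul0r.
Qed.

Arguments ipE : clear implicits.
Arguments ipE f {r}.

Definition Tm (f : V -> R[i]) x y := (f x)^*%R * ((E x y)%:C * expi (theta x y) * f y).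

Lemma madjE (f : V -> R[i]) {r} : uniq r -> (forall x, x \notin r -> f x = 0) ->
  ip m f (madj E m theta f) = \sum_(x <- r) \sum_(y <- r) Tm f x y.
Proof.
move=> ur Hr; rewrite (ipE f ur Hr); apply: eq_bigr => x _.
rewrite /madj (fsumT r ur); last by move=> y /Hr ->; rewrite mulr0.
have hc : (m x ^+ 2)%:C * ((m x ^+ 2)^-1)%:C = 1.
  by rewrite -rmorphM mulfV ?rmorph1 // expf_neq0 // gt_eqF.
rewrite /Tm -mulr_sumr.
transitivity (((m x ^+ 2)%:C * ((m x ^+ 2)^-1)%:C) * ((f x)^*%R *
  \sum_(y <- r) ((E x y)%:C * expi (theta x y) * f y))); first by ring.
by rewrite hc mul1r.
Qed.

Lemma conjR (x : R) : (x%:C)^*%R = x%:C.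
Proof.
apply/eqP; rewrite -CrealE realE ler0c (_ : 0 = (0:R)%:C) // lecR; exact: num_real.
Qed.

Lemma expiN (t : R) : (expi t)^*%R = expi (- t).
Proof. by rewrite /expi cosN sinN. Qed.

Lemma cM (a b : R[i]) : (a * b)^*%R = a^*%R * b^*%R.
Proof. exact: rmorphM. Qed.

Lemma Tm_conj (f : V -> R[i]) x y : (Tm f x y)^*%R = Tm f y x.
Proof.
rewrite /Tm !cM conjCK conjR expiN Esym -thN; ring.
Qed.

Lemma madj_real (f : V -> R[i]) : fin_supp f -> ip m f (madj E m theta f) \is Num.real.
Proof.
case=> s Hs; have ur := undup_uniq s.
have Hr : forall x, x \notin undup s -> f x = 0 by move=> x; rewrite mem_undup; exact: Hs.
rewrite (madjE f ur Hr).
set z := (X in X \is _).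
have zc : z^*%R = z.
  rewrite /z raddf_sum /=; under eq_bigr do rewrite raddf_sum /=.
  rewrite exchange_big /=; apply: eq_bigr => y _; apply: eq_bigr => x _.
  exact: Tm_conj.
by rewrite CrealE zc.
Qed.

Lemma cN (a : R[i]) : (- a)^*%R = - a^*%R.
Proof. exact: rmorphN. Qed.

Lemma ipB (f g h : V -> R[i]) : fin_supp f ->
  ip m f (fun x => g x - h x) = ip m f g - ip m f h.
Proof.
case=> s Hs; have ur := undup_uniq s.
have Hr : forall x, x \notin undup s -> f x = 0 by move=> x; rewrite mem_undup; exact: Hs.
rewrite !(ipE f ur Hr) -sumrB; apply: eq_bigr => x _; ring.
Qed.

Lemma ipD (f g h : V -> R[i]) : fin_supp f ->
  ip m f (fun x => g x + h x) = ip m f g + ip m f h.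
Proof.
case=> s Hs; have ur := undup_uniq s.
have Hr : forall x, x \notin undup s -> f x = 0 by move=> x; rewrite mem_undup; exact: Hs.
rewrite !(ipE f ur Hr) -big_split; apply: eq_bigr => x _ /=; ring.
Qed.

Variable P : V -> bool.
Hypothesis HP : forall x y, adj E x y -> P x != P y.

Definition flip (f : V -> R[i]) x := if P x then f x else - f x.

Lemma flip_supp f : fin_supp f -> fin_supp (flip f).
Proof.
case=> s Hs; exists s => x /Hs; rewrite /flip => ->; by case: (P x); rewrite ?oppr0.
Qed.

Lemma flipA f : fin_supp f ->
  ip m (flip f) (madj E m theta (flip f)) = - ip m f (madj E m theta f).
Proof.
move=> fs; case: (fs) => s Hs; have ur := undup_uniq s.
have Hr : forall x, x \notin undup s -> f x = 0 by move=> x; rewrite mem_undup; exact: Hs.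
have Hr' : forall x, x \notin undup s -> flip f x = 0.
  by move=> x /Hr; rewrite /flip => ->; case: (P x); rewrite ?oppr0.
rewrite (madjE f ur Hr) (madjE (flip f) ur Hr') -sumrN; apply: eq_bigr => x _.
rewrite -sumrN; apply: eq_bigr => y _.
rewrite /Tm /flip; have [e0|enz] := eqVneq (E x y) 0.
  by rewrite e0 rmorph0 !mul0r !mulr0 oppr0.
have := HP x y enz; case: (P x); case: (P y) => // _; rewrite ?cN; ring.
Qed.

Lemma flipW (W : V -> R) f : fin_supp f ->
  ip m (flip f) (mulop W (flip f)) = ip m f (mulop W f).
Proof.
move=> fs; case: (fs) => s Hs; have ur := undup_uniq s.
have Hr : forall x, x \notin undup s -> f x = 0 by move=> x; rewrite mem_undup; exact: Hs.
have Hr' : forall x, x \notin undup s -> flip f x = 0.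
  by move=> x /Hr; rewrite /flip => ->; case: (P x); rewrite ?oppr0.
rewrite (ipE f ur Hr) (ipE (flip f) ur Hr'); apply: eq_bigr => x _.
rewrite /mulop /flip; case: (P x); rewrite ?cN; ring.
Qed.

Lemma main_tfae (W : V -> R) :
  [<-> (forall f : V -> R[i], fin_supp f ->
          ip m f (mulop (fun x => degG E m x - W x) f) <= ip m f (mlap E m theta f));
       (forall f : V -> R[i], fin_supp f ->
          ip m f (mlap E m theta f) <= ip m f (mulop (fun x => degG E m x + W x) f));
       (forall f : V -> R[i], fin_supp f ->
          `|ip m f (madj E m theta f)| <= ip m f (mulop W f))].
Proof.
have key f : fin_supp f ->
  [/\ ip m f (mulop (fun x => degG E m x - W x) f) = ip m f (mulop (degG E m) f) - ip m f (mulop W f),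
      ip m f (mlap E m theta f) = ip m f (mulop (degG E m) f) - ip m f (madj E m theta f)
    & ip m f (mulop (fun x => degG E m x + W x) f) = ip m f (mulop (degG E m) f) + ip m f (mulop W f)].
  move=> fs; split.
  - rewrite -ipB //; congr (ip m f _); apply: boolp.funext => x.
    by rewrite /mulop rmorphB mulrBl.
  - rewrite -ipB //; congr (ip m f _); apply: boolp.funext => x; exact: mlapE.
  - rewrite -ipD //; congr (ip m f _); apply: boolp.funext => x.
    by rewrite /mulop rmorphD mulrDl.
have iff1 f : fin_supp f -> (ip m f (mulop (fun x => degG E m x - W x) f) <= ip m f (mlap E m theta f))
   = (ip m f (madj E m theta f) <= ip m f (mulop W f)).
  by case/key => -> -> _; rewrite lerD2l lerN2.
have iff2 f : fin_supp f -> (ip m f (mlap E m theta f) <= ip m f (mulop (fun x => degG E m x + W x) f))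
   = (- ip m f (mulop W f) <= ip m f (madj E m theta f)).
  by case/key => _ -> ->; rewrite lerD2l lerNl.
split; [|split].
- move=> H0 f fs; rewrite iff2 //; have := H0 _ (flip_supp f fs).
  rewrite iff1; last exact: flip_supp. by rewrite (flipA f fs) (flipW W f fs) lerNl.
- move=> H1 f fs; rewrite real_ler_norml ?madj_real //; apply/andP; split.
    by rewrite -iff2 // H1.
  have := H1 _ (flip_supp f fs).
  rewrite iff2; last exact: flip_supp. by rewrite (flipA f fs) (flipW W f fs) lerN2.
- move=> H2 f fs; rewrite iff1 //; exact: real_ler_normlW (madj_real f fs) (H2 f fs).
Qed.

End S.

Theorem proposition3p1 (R : realType) (V : countType)
  (E : V -> V -> R) (m : V -> R) (theta : V -> V -> R) (W : V -> R) :
  weighted_graph E m theta -> bipartite E -> (forall x, 0 <= W x) ->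
  [<-> (forall f : V -> R[i], fin_supp f ->
          ip m f (mulop (fun x => degG E m x - W x) f) <= ip m f (mlap E m theta f));
       (forall f : V -> R[i], fin_supp f ->
          ip m f (mlap E m theta f) <= ip m f (mulop (fun x => degG E m x + W x) f));
       (forall f : V -> R[i], fin_supp f ->
          `|ip m f (madj E m theta f)| <= ip m f (mulop W f))].
Proof.
move=> [Esym [_ [mpos [thN [_ [lf _]]]]]] [P HP] _.
exact: (@main_tfae R V E m theta Esym mpos thN lf P HP W).
Qed.
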